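(* Assume that the pair $(\mathcal P,\mathcal P')$ gives $(G,N,\theta)_{\mathcal H}\ge_c(H,M,\varphi)_{\mathcal H}$. Let $U\le\mathbb C^\times$ be the group of roots of unity. If $\epsilon:G_\theta\to U$ is any map that is constant on $N$-cosets and satisfies $\epsilon(1)=1$, then the pair $(\epsilon\mathcal P,\epsilon_{H_\theta}\mathcal P')$ also gives $(G,N,\theta)_{\mathcal H}\ge_c(H,M,\varphi)_{\mathcal H}$, where $(\epsilon\mathcal P)(x)=\epsilon(x)\mathcal P(x)$ and $\epsilon_{H_\theta}$ is the restriction of $\epsilon$ to $H_\theta$.
   Context: All groups are finite; $p$ is a fixed prime. $\mathbb Q^{\mathrm{ab}}\subseteq\mathbb C$ is generated by all roots of unity, $\mathcal G=\mathrm{Gal}(\mathbb Q^{\mathrm{ab}}/\mathbb Q)$, $\mathcal H\le\mathcal G$ consists of those $\sigma$ for which there is an integer $f$ with $\sigma(\xi)=\xi^{p^f}$ for all roots of unity $\xi$ of order prime to $p$. For $N\trianglelefteq G$, $\theta\in\mathrm{Irr}(N)$, $g\in G$, $\sigma\in\mathcal G$: $\theta^{g\sigma}(n)=\sigma(\theta(gng^{-1}))$; $A_\theta$ the stabilizer in $A\le G\times\mathcal G$; $\theta^{\mathcal H}$ the $\mathcal H$-orbit; $G_{\theta^{\mathcal H}}=\{g:\theta^g\in\theta^{\mathcal H}\}$. $(G,N,\theta)_{\mathcal H}$ is an $\mathcal H$-triple if $N\trianglelefteq G$, $\theta\in\mathrm{Irr}(N)$, $G_{\theta^{\mathcal H}}=G$.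 Projective representation $\mathcal P$ with factor set $\alpha$: $\mathcal P(x)\mathcal P(y)=\alpha(x,y)\mathcal P(xy)$. For $G$-invariant $\theta$, $\mathcal P$ is associated with $\theta$ if $\mathcal P_N$ affords $\theta$ and $\mathcal P(ng)=\mathcal P(n)\mathcal P(g)$, $\mathcal P(gn)=\mathcal P(g)\mathcal P(n)$. $\mathcal Q\sim\mu\mathcal P$ means $\mathcal Q(x)=\mu(x)M^{-1}\mathcal P(x)M$ for fixed invertible $M$. For $\mathcal P$ associated with $\theta$ on $G_\theta$ with entries in $\mathbb Q^{\mathrm{ab}}$ and $\theta^{x\sigma}=\theta$: $\mathcal P^{x\sigma}(y)=\sigma(\mathcal P(xyx^{-1}))$, and $\mu_{x\sigma}$ is the unique function $G_\theta\to\mathbb C^\times$, constant on $N$-cosets, $\mu_{x\sigma}(1)=1$, with $\mathcal P^{x\sigma}\sim\mu_{x\sigma}\mathcal P$. For $\mathcal H$-triples with $H\le G$, the pair $(\mathcal P,\mathcal P')$ gives $(G,N,\theta)_{\mathcal H}\ge_c(H,M,\varphi)_{\mathcal H}$ if: (i) $G=NH$, $N\cap H=M$, $\mathbf C_G(N)\subseteq H$; (ii) $(H\times\mathcal H)_\theta=(H\times\mathcal H)_\varphi$; (iii) $\mathcal P$ is a projective representation of $G_\theta$ associated with $\theta$ and $\mathcal P'$ one of $H_\varphi$ associated with $\varphi$, entries in $\mathbb Q^{\mathrm{ab}}$, factor sets with root-of-unity values agreeing on $H_\theta\times H_\theta$, and $\mathcal P(c),\mathcal P'(c)$ the same scalar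 for all $c\in\mathbf C_G(N)$; (iv) $\mu_a=\mu'_a$ on $H_\theta$ for all $a\in(H\times\mathcal H)_\theta$ (with $\mu_a$, $\mu'_a$ computed from $\mathcal P$, $\mathcal P'$). *)

(* Defs.v *)
From HB Require Import structures.
From mathcomp Require Import all_boot all_order all_algebra.
From mathcomp Require Import all_fingroup all_solvable all_field all_character.
From Stdlib Require Import ClassicalEpsilon.
Set Implicit Arguments. Unset Strict Implicit. Unset Printing Implicit Defensive.
Import Order.TTheory GRing.Theory Num.Theory.
Local Open Scope ring_scope.

(* Complex numbers are modelled by the algebraic numbers algC (all character
   values and all entries in Q^ab are algebraic).  An element sigma of
   Gal(Q^ab/Q) is represented by a ring automorphism of algC (every such
   automorphism extends one of Q^ab and every one of Q^ab is obtained so);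
   only its restriction to Q^ab is ever used. *)

Definition rootOfUnity (z : algC) : Prop := exists2 n : nat, (0 < n)%N & z ^+ n = 1.

Definition in_Qab (z : algC) : Prop :=
  exists n (zeta : algC) (q : {poly rat}),
    [/\ (0 < n)%N, n.-primitive_root zeta & z = (map_poly ratr q).[zeta]].

(* sigma belongs to the subgroup \mathcal H (for the prime p): there is an
   integer f with sigma(xi) = xi^(p^f) for all roots of unity xi of order
   prime to p.  f >= 0 is the first disjunct; f = -e < 0 means
   sigma(xi)^(p^e) = xi. *)
Definition in_calH (p : nat) (sigma : {rmorphism algC -> algC}) : Prop :=
  exists e : nat,
    (forall (xi : algC) (n : nat), (0 < n)%N -> coprime n p -> xi ^+ n = 1 ->
       sigma xi = xi ^+ (p ^ e)) \/
    (forall (xi : algC) (n : nat), (0 < n)%N -> coprime n p -> xi ^+ n = 1 ->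
       (sigma xi) ^+ (p ^ e) = xi).

(* theta^{g sigma}(n) = sigma(theta(g n g^-1)) *)
Definition cfact (gT : finGroupType) (N : {group gT}) (theta : 'CF(N)) (g : gT)
  (sigma : {rmorphism algC -> algC}) : 'CF(N) := cfAut sigma (theta ^ g)%CF.

Definition Htriple (p : nat) (gT : finGroupType) (G N : {group gT}) (theta : 'CF(N)) : Prop :=
  [/\ (N <| G)%g, theta \in irr N &
      forall g, g \in G -> exists2 sigma, in_calH p sigma & (theta ^ g)%CF = cfAut sigma theta].

Definition factor_set (gT : finGroupType) (d : nat) (D : {set gT})
  (P : gT -> 'M[algC]_d) (alpha : gT -> gT -> algC) : Prop :=
  forall x y, x \in D -> y \in D -> P x *m P y = alpha x y *: P (x * y)%g.

Definition proj_rep (gT : finGroupType) (d : nat) (D : {set gT}) (P : gT -> 'M[algC]_d) : Prop :=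
  (forall x, x \in D -> P x \in unitmx) /\ exists alpha, factor_set D P alpha.

Definition proj_assoc (gT : finGroupType) (d : nat) (D : {set gT}) (N : {group gT})
  (theta : 'CF(N)) (P : gT -> 'M[algC]_d) : Prop :=
  [/\ proj_rep D P,
      (forall n m, n \in N -> m \in N -> P (n * m)%g = P n *m P m),
      (forall n, n \in N -> \tr (P n) = theta n),
      (forall n g, n \in N -> g \in D -> P (n * g)%g = P n *m P g) &
      (forall n g, n \in N -> g \in D -> P (g * n)%g = P g *m P n)].

Definition is_mu (gT : finGroupType) (d : nat) (D : {set gT}) (N : {group gT})
  (P : gT -> 'M[algC]_d) (x : gT) (sigma : {rmorphism algC -> algC}) (mu : gT -> algC) : Prop :=
  [/\ mu 1%g = 1,
      (forall y n, y \in D -> n \in N -> mu (n * y)%g = mu y),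
      (forall y, y \in D -> mu y != 0) &
      exists2 Mx : 'M[algC]_d, Mx \in unitmx &
        forall y, y \in D ->
          map_mx sigma (P (x * y * x^-1)%g) = mu y *: (invmx Mx *m P y *m Mx)].

(* mu_{x sigma}: THE function with the above properties (unique by the paper) *)
Definition mu_of (gT : finGroupType) (d : nat) (D : {set gT}) (N : {group gT})
  (P : gT -> 'M[algC]_d) (x : gT) (sigma : {rmorphism algC -> algC}) : gT -> algC :=
  epsilon (inhabits (fun _ => 1)) (is_mu D N P x sigma).

Definition ge_c (p : nat) (gT : finGroupType) (G N : {group gT}) (theta : 'CF(N))
  (H M : {group gT}) (phi : 'CF(M)) (d d' : nat)
  (P : gT -> 'M[algC]_d) (P' : gT -> 'M[algC]_d') : Prop :=
  [/\ [/\ Htriple p G theta, Htriple p H phi & H \subset G],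
      [/\ (N * H)%g = G, (N :&: H)%g = M & ('C_G(N) \subset H)%g],
      (forall h sigma, h \in H -> in_calH p sigma ->
         (cfact theta h sigma = theta <-> cfact phi h sigma = phi)),
      [/\ proj_assoc ('I_G[theta])%g theta P /\ proj_assoc ('I_H[phi])%g phi P',
          (forall x i j, x \in ('I_G[theta])%g -> in_Qab (P x i j)) /\
          (forall x i j, x \in ('I_H[phi])%g -> in_Qab (P' x i j)),
          (exists alpha alpha',
             [/\ factor_set ('I_G[theta])%g P alpha, factor_set ('I_H[phi])%g P' alpha',
                 (forall x y, x \in ('I_G[theta])%g -> y \in ('I_G[theta])%g -> rootOfUnity (alpha x y)),
                 (forall x y, x \in ('I_H[phi])%g -> y \in ('I_H[phi])%g -> rootOfUnity (alpha' x y)) &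
                 (forall x y, x \in ('I_H[theta])%g -> y \in ('I_H[theta])%g -> alpha x y = alpha' x y)]) &
          (forall c, c \in ('C_G(N))%g -> exists lambda : algC,
             P c = lambda%:M /\ P' c = lambda%:M)] &
      (forall h sigma, h \in H -> in_calH p sigma -> cfact theta h sigma = theta ->
         {in ('I_H[theta])%g, mu_of ('I_G[theta])%g N P h sigma =1 mu_of ('I_H[phi])%g M P' h sigma})].

(* Main.v *)
Require Import Defs.
From mathcomp Require Import all_boot all_order all_algebra.
From mathcomp Require Import all_fingroup all_solvable all_field all_character.
From Stdlib Require Import ClassicalEpsilon.
Set Implicit Arguments. Unset Strict Implicit. Unset Printing Implicit Defensive.
Import Order.TTheory GRing.Theory Num.Theory.
Local Open Scope ring_scope.

Section Gen.
Variables (gT : finGroupType) (d : nat) (D N : {group gT}) (theta : 'CF(N)) (P : gT -> 'M[algC]_d).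
Hypotheses (sND : N \subset D) (nND : D \subset 'N(N)%g) (irrT : theta \in irr N)
  (PA : proj_assoc D theta P).

Lemma PU x : x \in D -> P x \in unitmx.
Proof. by case: PA => [[U _] _ _ _ _]; apply: U. Qed.

Lemma P1 : P 1%g = 1%:M.
Proof.
case: PA => _ PM _ _ _.
have U := PU (group1 D).
have := PM 1%g 1%g (group1 N) (group1 N); rewrite mulg1 => E.
by rewrite -(mulVmx U) {3}E mulKmx.
Qed.

Lemma PNrepr : mx_repr N P.
Proof. split; first exact: P1. by case: PA => _ PM _ _ _ x y Nx Ny; apply: PM. Qed.

Definition rP := MxRepresentation PNrepr.

Lemma cfRepr_rP : cfRepr rP = theta.
Proof.
apply/cfun_inP => n Nn; rewrite cfunE Nn mulr1n.
by case: PA => _ _ E _ _; apply: E.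
Qed.

Lemma rP_irr : mx_irreducible rP.
Proof.
case/irr_reprP: irrT => rG irrG eq.
apply: (mx_rsim_irr _ irrG); apply/cfRepr_rsimP.
by rewrite cfRepr_rP -eq.
Qed.

Lemma d_gt0 : (0 < d)%N.
Proof. by case/mx_irrP: rP_irr. Qed.

Lemma schur A : (forall n, n \in N -> A *m P n = P n *m A) -> exists a, A = a%:M.
Proof.
move=> cA; apply/is_scalar_mxP.
apply: (mx_abs_irr_cent_scalar (group_closure_closed_field rP_irr)).
by apply/centgmxP => n Nn; apply: cA.
Qed.

Lemma unit_neq0 (A : 'M[algC]_d) : A \in unitmx -> A != 0.
Proof.
move: A; case: d d_gt0 => // k _ A; apply: contraL => /eqP->.
by rewrite unitmxE det0 unitr0.
Qed.

Lemma muN (mu : gT -> algC) : mu 1%g = 1 -> (forall y n, y \in D -> n \in N -> mu (n * y)%g = mu y) ->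
  forall n, n \in N -> mu n = 1.
Proof. by move=> h1 hN n Nn; rewrite -(mulg1 n) hN. Qed.

Lemma mu_uniq x s mu1 mu2 : is_mu D N P x s mu1 -> is_mu D N P x s mu2 -> {in D, mu1 =1 mu2}.
Proof.
case=> m11 m1N _ [M1 U1 E1]; case=> m21 m2N _ [M2 U2 E2].
have sN := subsetP sND.
pose C := M1 *m invmx M2.
have eqN n : n \in N -> invmx M1 *m P n *m M1 = invmx M2 *m P n *m M2.
  move=> Nn; have := E2 n (sN n Nn).
  by rewrite E1 ?sN // (muN m11 m1N Nn) (muN m21 m2N Nn) !scale1r.
have cC n : n \in N -> C *m P n = P n *m C.
  move=> Nn; rewrite /C -mulmxA.
  have ->: invmx M2 *m P n = invmx M1 *m P n *m M1 *m invmx M2 by rewrite eqN // mulmxK.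
  by rewrite !mulmxA (mulmxV U1) mul1mx.
have [a Ca] := schur cC.
have UC : C \in unitmx by rewrite unitmx_mul U1 unitmx_inv.
have a0 : a != 0.
  by apply: contraNneq (unit_neq0 UC) => a0; rewrite Ca a0; apply/eqP/matrixP => i j; rewrite !mxE mul0rn.
have M1E : M1 = a *: M2 by rewrite -mul_scalar_mx -Ca /C mulmxKV.
have eqM y : invmx M1 *m P y *m M1 = invmx M2 *m P y *m M2.
  rewrite M1E invmxZ; last by rewrite -M1E.
  by rewrite -!scalemxAl scalemxAr scalerA mulVf // scale1r.
move=> y Dy; have := E1 y Dy; rewrite E2 // eqM => h.
have XU : invmx M2 *m P y *m M2 \in unitmx by rewrite !unitmx_mul unitmx_inv U2 PU.
move/eqP: h; rewrite eq_sym -subr_eq0 -scalerBl scalemx_eq0 (negbTE (unit_neq0 XU)) orbF subr_eq0.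
by move/eqP.
Qed.

Lemma mu_exists x (s : {rmorphism algC -> algC}) :
  x \in 'N(N)%g -> (forall y, y \in D -> (x * y * x^-1)%g \in D) ->
  cfAut s (theta ^ x)%CF = theta -> exists mu, is_mu D N P x s mu.
Proof.
move=> nNx nDx eqT.
case: PA => [[_ _] PM PT PNl PNr].
have sN := subsetP sND; have nN := subsetP nND.
pose c y := (x * y * x^-1)%g.
have cE y : c y = (y ^ x^-1)%g by rewrite /c conjgE invgK mulgA.
have cM y z : c (y * z)%g = (c y * c z)%g by rewrite !cE conjMg.
have cN n : n \in N -> c n \in N by move=> Nn; rewrite cE memJ_norm ?groupV.
pose Q y := map_mx s (P (c y)).
have QM y n : y \in D -> n \in N -> Q (y * n)%g = Q y *m Q n.
  by move=> Dy Nn; rewrite /Q cM PNr ?nDx ?cN // map_mxM.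
have QMl n y : n \in N -> y \in D -> Q (n * y)%g = Q n *m Q y.
  by move=> Nn Dy; rewrite /Q cM PNl ?nDx ?cN // map_mxM.
have Q1 : Q 1%g = 1%:M by rewrite /Q /c mulg1 mulgV P1 map_mx1.
have Qrepr : mx_repr N Q.
  by split=> // y z Ny Nz; rewrite QM ?sN.
pose rQ := MxRepresentation Qrepr.
have : cfRepr rP == cfRepr rQ.
  rewrite cfRepr_rP; apply/eqP/cfun_inP => n Nn.
  by rewrite cfunE Nn mulr1n -{1}eqT cfunE cfConjgE // -cE /= /Q trace_map_mx PT ?cN.
case/cfRepr_rsimP => B _ freeB hB.
have UB : B \in unitmx by rewrite -row_free_unit.
have PB n : n \in N -> P n *m B = B *m Q n := hB n.
pose R y := B *m Q y *m invmx B *m invmx (P y).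
have cR y : y \in D -> forall m, m \in N -> R y *m P m = P m *m R y.
  move=> Dy m Nm; pose n := (m ^ y)%g.
  have Nn : n \in N by rewrite memJ_norm ?nN.
  have ymy : (y * n = m * y)%g by rewrite /n conjgE !mulgA mulgV mul1g.
  have EP : P y *m P n = P m *m P y by rewrite -PNr ?ymy ?PNl.
  have EQ : Q y *m Q n = Q m *m Q y by rewrite -QM ?ymy ?QMl.
  have E1 : invmx (P y) *m P m = P n *m invmx (P y).
    have ->: P m = P y *m P n *m invmx (P y) by rewrite EP mulmxK ?PU.
    by rewrite !mulmxA mulVmx ?PU // mul1mx.
  have E2 : invmx B *m P n = Q n *m invmx B.
    by rewrite -[P n](mulmxK UB) PB // !mulmxA mulVmx // mul1mx.
  rewrite /R -mulmxA E1 mulmxA -(mulmxA _ (invmx B)) E2 !mulmxA -(mulmxA B) EQ.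
  by rewrite mulmxA -PB // !mulmxA.
pose mu y := \tr (R y) / d%:R.
have d0 : (d%:R : algC) != 0 by rewrite pnatr_eq0 -lt0n d_gt0.
have muE y : y \in D -> R y = (mu y)%:M.
  move=> Dy; have [a Ra] := schur (cR y Dy); rewrite Ra.
  by rewrite /mu Ra mxtrace_scalar -(mulr_natr a) mulfK.
have RP y : y \in D -> R y *m P y = B *m Q y *m invmx B by move=> Dy; rewrite /R mulmxKV ?PU.
have QU y : y \in D -> Q y \in unitmx by move=> Dy; rewrite map_unitmx PU ?nDx.
exists mu; split.
- have ->: mu 1%g = \tr (R 1%g) / d%:R by [].
  have ->: R 1%g = 1%:M by rewrite /R Q1 mulmx1 mulmxV // P1 invmx1 mulmx1.
  by rewrite mxtrace1 divff.
- move=> y n Dy Nn; have Dny : (n * y)%g \in D by rewrite groupM // sN.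
  suff E : R (n * y)%g = R y by rewrite /mu E.
  rewrite -[R (n * y)%g](mulmxK (PU Dny)) RP // QMl // !mulmxA -PB //.
  rewrite -(mulmxA (P n) B (Q y)) -(mulmxA (P n)) -RP // mulmxA -cR // -(mulmxA (R y)) -PNl //.
  by rewrite mulmxK ?PU.
- move=> y Dy; apply/eqP => mu0.
  have : R y \in unitmx by rewrite !unitmx_mul UB QU ?unitmx_inv ?UB ?PU.
  rewrite muE // mu0 => /unit_neq0 /eqP; apply.
  by apply/matrixP => i j; rewrite !mxE mul0rn.
exists B => // y Dy.
rewrite -/(Q y).
have h : B *m Q y *m invmx B = (mu y)%:M *m P y by rewrite -RP // muE.
have ->: Q y = invmx B *m (B *m Q y *m invmx B) *m B by rewrite !mulmxA mulVmx // mul1mx mulmxKV.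
by rewrite h mul_scalar_mx -scalemxAr -scalemxAl.
Qed.

End Gen.

Definition twist (gT : finGroupType) d (eps : gT -> algC) (P : gT -> 'M[algC]_d) :=
  fun x => (eps x *: P x : 'M[algC]_d).

Lemma mu_of_spec (gT : finGroupType) d (D N : {group gT}) (theta : 'CF(N)) (P : gT -> 'M[algC]_d) x s :
  N \subset D -> D \subset 'N(N)%g -> theta \in irr N -> proj_assoc D theta P ->
  x \in 'N(N)%g -> (forall y, y \in D -> (x * y * x^-1)%g \in D) ->
  cfAut s (theta ^ x)%CF = theta -> is_mu D N P x s (mu_of D N P x s).
Proof. move=> sND nND irrT PA nNx nDx eqT; rewrite /mu_of; apply: epsilon_spec; exact: (mu_exists sND nND irrT PA nNx nDx eqT). Qed.

Section Twist.
Variables (gT : finGroupType) (d : nat) (D N : {group gT}) (theta : 'CF(N))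
  (P : gT -> 'M[algC]_d) (eps : gT -> algC).
Hypotheses (sND : N \subset D) (nND : D \subset 'N(N)%g) (irrT : theta \in irr N)
  (PA : proj_assoc D theta P)
  (epsU : forall y, y \in D -> eps y != 0)
  (epsN : forall y n, y \in D -> n \in N -> eps (n * y)%g = eps y)
  (eps1 : eps 1%g = 1).

Lemma epsN1 n : n \in N -> eps n = 1.
Proof. by move=> Nn; rewrite -(mulg1 n) epsN. Qed.

Lemma epsNr y n : y \in D -> n \in N -> eps (y * n)%g = eps y.
Proof.
move=> Dy Nn; have ->: (y * n = (n ^ y^-1) * y)%g by rewrite conjgE invgK mulgA mulgKV.
by rewrite epsN // memJ_norm // groupV (subsetP nND).
Qed.

Lemma fs_twist alpha : factor_set D P alpha ->
  factor_set D (twist eps P) (fun x y => eps x * eps y / eps (x * y)%g * alpha x y).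
Proof.
move=> fs x y Dx Dy; rewrite /twist -scalemxAl -scalemxAr scalerA fs // !scalerA.
by rewrite [X in _ = X *: _]mulrAC divfK // epsU // groupM.
Qed.

Lemma assoc_twist : proj_assoc D theta (twist eps P).
Proof.
have sN := subsetP sND.
case: PA => [[PU [alpha fs]] PM PT PNl PNr]; split.
- split; last by exists (fun x y => eps x * eps y / eps (x * y)%g * alpha x y); apply: fs_twist.
  by move=> x Dx; rewrite /twist unitmxZ ?PU // unitfE epsU.
- by move=> n m Nn Nm; rewrite /twist !epsN1 ?groupM // !scale1r PM.
- by move=> n Nn; rewrite /twist epsN1 // scale1r PT.
- move=> n g Nn Dg; rewrite /twist epsN // (epsN1 Nn) scale1r PNl //.
  by rewrite scalemxAr.
- move=> n g Nn Dg; rewrite /twist epsNr // (epsN1 Nn) scale1r PNr //.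
  by rewrite scalemxAl.
Qed.

Lemma is_mu_twist x (s : {rmorphism algC -> algC}) mu :
  x \in 'N(N)%g -> (forall y, y \in D -> (x * y * x^-1)%g \in D) ->
  is_mu D N P x s mu ->
  is_mu D N (twist eps P) x s (fun y => mu y * s (eps (x * y * x^-1)%g) / eps y).
Proof.
move=> nNx nDx [m1 mN m0 [M UM EM]]; split.
- by rewrite mulg1 mulgV eps1 rmorph1 m1 !mul1r invr1.
- move=> y n Dy Nn.
  have ->: (x * (n * y) * x^-1 = (x * n * x^-1) * (x * y * x^-1))%g by rewrite !mulgA mulgKV.
  have Nc : (x * n * x^-1)%g \in N by rewrite -mulgA -{1}(invgK x) -conjgE memJ_norm // groupV.
  by rewrite (epsN (nDx y Dy) Nc) (epsN Dy Nn) mN.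
- by move=> y Dy; rewrite mulf_neq0 ?invr_eq0 ?epsU // mulf_neq0 ?m0 // fmorph_eq0 epsU ?nDx.
exists M => // y Dy; rewrite /twist map_mxZ EM // -scalemxAr -scalemxAl !scalerA.
by congr (_ *: _); rewrite mulrC divfK ?epsU.
Qed.

Lemma mu_twist x (s : {rmorphism algC -> algC}) :
  x \in 'N(N)%g -> (forall y, y \in D -> (x * y * x^-1)%g \in D) ->
  cfAut s (theta ^ x)%CF = theta ->
  {in D, mu_of D N (twist eps P) x s =1
     (fun y => mu_of D N P x s y * s (eps (x * y * x^-1)%g) / eps y)}.
Proof.
move=> nNx nDx eqT.
have tw := is_mu_twist nNx nDx (mu_of_spec sND nND irrT PA nNx nDx eqT).
have spec2 : is_mu D N (twist eps P) x s (mu_of D N (twist eps P) x s).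
  by rewrite /mu_of; apply: epsilon_spec; exists (fun y => mu_of D N P x s y * s (eps (x * y * x^-1)%g) / eps y).
exact: (mu_uniq sND irrT assoc_twist spec2 tw).
Qed.

End Twist.
Lemma Qab_root z w : rootOfUnity z -> in_Qab w -> in_Qab (z * w).
Proof.
case=> k k0 zk [n [zeta [q [n0 pz ->]]]].
have kn0 : (0 < k * n)%N by rewrite muln_gt0 k0.
have [om pom] := C_prim_root_exists kn0.
have pk : n.-primitive_root (om ^+ k).
  by have := dvdn_prim_root pom (dvdn_mull k (dvdnn n)); rewrite mulnK.
have pn : k.-primitive_root (om ^+ n).
  by have := dvdn_prim_root pom (dvdn_mulr n (dvdnn k)); rewrite mulKn.
have [[i _] /= zi] := prim_rootP pk (prim_expr_order pz).
have [[j _] /= zj] := prim_rootP pn zk.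
exists (k * n)%N, om, ('X^(n * j) * (q \Po 'X^(k * i))); split => //.
rewrite rmorphM /= map_polyXn map_comp_poly map_polyXn hornerM hornerXn horner_comp hornerXn.
by rewrite zj zi !exprM.
Qed.

Lemma root_mul a b : rootOfUnity a -> rootOfUnity b -> rootOfUnity (a * b).
Proof.
case=> m m0 am [n n0 bn]; exists (m * n)%N; first by rewrite muln_gt0 m0.
by rewrite exprMn {2}mulnC !exprM am bn !expr1n mulr1.
Qed.

Lemma root_inv a : rootOfUnity a -> rootOfUnity a^-1.
Proof. by case=> m m0 am; exists m => //; rewrite exprVn am invr1. Qed.

Lemma root_neq0 a : rootOfUnity a -> a != 0.
Proof. by case=> m m0 am; apply: contraTneq isT => a0; move: am; rewrite a0 expr0n eqn0Ngt m0 => /eqP; rewrite eq_sym oner_eq0. Qed.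

Lemma cfAut_idfun (gT : finGroupType) (K : {group gT}) (f : 'CF(K)) :
  cfAut (idfun : {rmorphism algC -> algC}) f = f.
Proof. by apply/cfunP => y; rewrite cfunE. Qed.

Lemma calH_id p : in_calH p (idfun : {rmorphism algC -> algC}).
Proof. by exists 0%N; left => xi n _ _ _; rewrite expn0 expr1. Qed.

Lemma inertia_conj (gT : finGroupType) (K L : {group gT}) (phi : 'CF(L)) h
  (s : {rmorphism algC -> algC}) :
  h \in K -> h \in 'N(L)%g -> cfAut s (phi ^ h)%CF = phi ->
  forall y, y \in ('I_K[phi])%g -> (h * y * h^-1)%g \in ('I_K[phi])%g.
Proof.
move=> Kh nLh eq y; rewrite !in_setI => /andP[Ky Iy]; apply/andP; split; first by rewrite !groupM ?groupV.
have ->: (h * y * h^-1 = y ^ h^-1)%g by rewrite conjgE invgK mulgA.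
have IA : 'I[cfAut s (phi ^ h)]%g = 'I[phi ^ h]%g.
  by apply/setP => z; rewrite !inE -cfAutConjg (inj_eq (cfAut_inj s)).
by rewrite -mem_conjg conjg_inertia // -IA eq.
Qed.

Unset Implicit Arguments.

Theorem lemma1p6 (p : nat) (gT : finGroupType) (G N : {group gT}) (theta : 'CF(N))
  (H M : {group gT}) (phi : 'CF(M)) (d d' : nat)
  (P : gT -> 'M[algC]_d) (P' : gT -> 'M[algC]_d') (eps : gT -> algC) :
  prime p ->
  ge_c p G theta H phi P P' ->
  (forall x, x \in ('I_G[theta])%g -> rootOfUnity (eps x)) ->
  (forall x n, x \in ('I_G[theta])%g -> n \in N -> eps (n * x)%g = eps x) ->
  eps 1%g = 1 ->
  ge_c p G theta H phi (fun x => (eps x *: P x : 'M[algC]_d)%R) (fun x => (eps x *: P' x : 'M[algC]_d')%R).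
Proof.
move=> _ [[HT HT' sHG] [NH NHM CH] ii [[PA PA'] [QP QP'] [alpha [alpha' [fs fs' ra ra' agree]]] Cc] iv]
  epsR epsN eps1.
change (ge_c p G theta H phi (twist eps P) (twist eps P')).
have HT0 := HT; have HT0' := HT'.
case: HT0 => nsNG irrT _; case: HT0' => nsMH irrP _.
pose idm := (idfun : {rmorphism algC -> algC}).
have sND : N \subset ('I_G[theta])%G by apply: sub_Inertia; apply: normal_sub.
have nND : ('I_G[theta])%G \subset 'N(N)%g by apply: norm_Inertia.
have sMD : M \subset ('I_H[phi])%G by apply: sub_Inertia; apply: normal_sub.
have nMD : ('I_H[phi])%G \subset 'N(M)%g by apply: norm_Inertia.
have nNH : H \subset 'N(N)%g by apply: subset_trans sHG (normal_norm nsNG).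
have nMH : H \subset 'N(M)%g by apply: normal_norm.
have eqI h : h \in H -> (h \in 'I[theta]%g) = (h \in 'I[phi]%g).
  move=> Hh; have nN := subsetP nNH h Hh; have nM := subsetP nMH h Hh.
  rewrite !inE in nN nM *; rewrite nN nM /=.
  have [i1 i2] := ii h idm Hh (calH_id p); rewrite /cfact !cfAut_idfun in i1 i2.
  by apply/eqP/eqP.
have IH : ('I_H[theta])%g = ('I_H[phi])%g.
  apply/setP => h; rewrite !in_setI; case Hh: (h \in H) => //=; exact: eqI.
have sDD : ('I_H[phi])%g \subset ('I_G[theta])%g by rewrite -IH setSI.
have sMN : M \subset N by rewrite -NHM subsetIl.
have epsU : forall y, y \in ('I_G[theta])%G -> eps y != 0 by move=> y /epsR /root_neq0.
have epsU' : forall y, y \in ('I_H[phi])%G -> eps y != 0 by move=> y /(subsetP sDD) /epsU.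
have epsN' : forall y n, y \in ('I_H[phi])%G -> n \in M -> eps (n * y)%g = eps y.
  by move=> y n /(subsetP sDD) Dy /(subsetP sMN) Nn; apply: epsN.
split => //.
- split.
  + split; [exact: assoc_twist | exact: assoc_twist].
  + split => x i j Dx; rewrite /twist mxE; apply: Qab_root.
    * exact: epsR.
    * exact: QP.
    * exact/epsR/(subsetP sDD).
    * exact: QP'.
  + exists (fun x y => eps x * eps y / eps (x * y)%g * alpha x y).
    exists (fun x y => eps x * eps y / eps (x * y)%g * alpha' x y).
    split.
    * exact: fs_twist.
    * exact: fs_twist.
    * move=> x y Dx Dy; apply: root_mul; last exact: ra.
      apply: root_mul; last by apply/root_inv/epsR; rewrite groupM.
      by apply: root_mul; apply: epsR.
    * move=> x y Dx Dy; have Dx' := subsetP sDD x Dx; have Dy' := subsetP sDD y Dy.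
      apply: root_mul; last exact: ra'.
      apply: root_mul; last by apply/root_inv/epsR; rewrite groupM.
      by apply: root_mul; apply: epsR.
    * by move=> x y Dx Dy; rewrite agree.
  + move=> c Cc'; have [lam [E1 E2]] := Cc c Cc'.
    by exists (eps c * lam); rewrite /twist E1 E2 !scale_scalar_mx.
- move=> h s Hh cs eqT y Iy.
  have eqP' : cfact phi h s = phi by apply/(ii h s Hh cs).
  have nNh : h \in 'N(N)%g := subsetP nNH h Hh.
  have nMh : h \in 'N(M)%g := subsetP nMH h Hh.
  have Gh : h \in G := subsetP sHG h Hh.
  have Dy : y \in ('I_G[theta])%G by apply: (subsetP (setSI _ sHG)).
  have Dy' : y \in ('I_H[phi])%g by rewrite -IH.
  rewrite (mu_twist sND nND irrT PA epsU epsN eps1 nNh (inertia_conj Gh nNh eqT) eqT Dy).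
  rewrite (mu_twist sMD nMD irrP PA' epsU' epsN' eps1 nMh (inertia_conj Hh nMh eqP') eqP' Dy').
  by rewrite /= iv.
Qed.
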